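(* Let $n\ge3$ and $\ell\ge1$, and let $c$ be an SR state on $K_n^{(\ell)}$. Let $k_1,k_2,k_3\in\{1,\dots,n\}$ be distinct, and suppose there is an orientation $\mathcal{O}$ of the complete graph $K_n$ on $\{1,\dots,n\}$ with $c_i\ge\mathrm{in}^{\mathcal{O}}_i$ for all $i\in\{1,\dots,n\}$ such that $k_1\to k_2$, $k_2\to k_3$ and $k_1\to k_3$ in $\mathcal{O}$. Then there exists a finite sequence of grain additions and topplings on $K_n^{(\ell)}$ leading from $c^{\max}$ to $c$ in which every toppling of $k_1$, $k_2$ or $k_3$ is deterministic, and in which the last topplings of these three vertices occur in the order $k_3$, then $k_2$, then $k_1$ ($k_3$ possibly never toppling).
   Context: For $n\ge3,\ell\ge1$, $K_n^{(\ell)}$ is the multigraph on vertex set $\{0,1,\dots,n\}$ with one edge between each pair of distinct vertices of $\{1,\dots,n\}$ and $\ell$ parallel edges between each $k\in\{1,\dots,n\}$ and the sink $0$; so every non-sink vertex has degree $n-1+\ell$. A configuration is $c\in\mathbb{Z}_{\ge0}^n$, stable if $c_i<n-1+\ell$ for all $i$; $c^{\max}=(n-2+\ell,\dots,n-2+\ell)$. A toppling of a vertex $i$ with $c_i\ge n-1+\ell$ moves one grain from $i$ along each edge of some sub-multiset of the edges incident to $i$ to the other endpoint (grains reaching the sink disappear); it is deterministic if that sub-multiset consists of all incident edges. A sequence of grain additions and topplings is a finite sequence of operations, each either adding one grain at a vertex of $\{1,\dots,n\}$ or toppling a currently unstable vertex. In the SSM with parameter $p\in(0,1)$, an unstable vertex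 topples by sending, independently for each incident edge, one grain along it with probability $p$; the SSM Markov chain on stable configurations adds a grain at vertex $i$ with probability $\mu_i>0$ and stabilises, and SR states are its recurrent states (equivalently, stable configurations reachable from $c^{\max}$ by a sequence of grain additions and topplings). $\mathrm{in}^{\mathcal{O}}_i$ denotes the in-degree of $i$ in $\mathcal{O}$, and $x\to y$ means the edge $\{x,y\}$ is directed from $x$ to $y$. *)

(* Defs.v *)
From HB Require Import structures.
From mathcomp Require Import all_boot.
Set Implicit Arguments. Unset Strict Implicit. Unset Printing Implicit Defensive.

(* Non-sink vertices 1..n of K_n^(l) are represented by 'I_n (vertex k+1 <-> k);
   the sink 0 is implicit.  Every non-sink vertex has degree n - 1 + l. *)

Definition config (n : nat) := {ffun 'I_n -> nat}.

Definition deg (n l : nat) : nat := n - 1 + l.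

Definition stable (n l : nat) (c : config n) : bool :=
  [forall i, c i < deg n l].

Definition cmax (n l : nat) : config n := [ffun _ => n - 2 + l].

(* An operation: add one grain at i, or topple i sending one grain to each
   non-sink neighbour in A (i \notin A) and s grains (s <= l) to the sink,
   i.e. along a sub-multiset of the edges incident to i. *)
Inductive op (n : nat) :=
| Add of 'I_n
| Topple of 'I_n & {set 'I_n} & nat.

Definition step (n l : nat) (c : config n) (o : op n) : option (config n) :=
  match o with
  | Add i => Some [ffun j => c j + (j == i)]
  | Topple i A s =>
      if [&& deg n l <= c i, s <= l & i \notin A]
      then Some [ffun j => if j == i then c i - (#|A| + s) else c j + (j \in A)]
      else None
  end.

Definition run (n l : nat) (c : config n) (ops : seq (op n)) : option (config n) :=
  foldl (fun oc o => obind (fun c' => step l c' o) oc) (Some c) ops.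

Definition deterministic (n l : nat) (o : op n) : bool :=
  match o with
  | Topple i A s => (A == [set~ i]) && (s == l)
  | Add _ => true
  end.

Definition topples_vertex (n : nat) (o : op n) (k : 'I_n) : bool :=
  match o with Topple i _ _ => i == k | Add _ => false end.

Definition topple_at (n : nat) (ops : seq (op n)) (k : 'I_n) (t : nat) : bool :=
  topples_vertex (nth (Add k) ops t) k.

Definition last_topple (n : nat) (ops : seq (op n)) (k : 'I_n) (t : nat) : Prop :=
  topple_at ops k t /\ forall t', t < t' -> ~~ topple_at ops k t'.

(* SR states: stable configurations reachable from cmax by a sequence of
   grain additions and topplings (the characterization given in the context). *)
Definition SR (n l : nat) (c : config n) : Prop :=
  stable l c /\ exists ops, run l (cmax n l) ops = Some c.

(* orientations of the complete graph K_n: o x y means x -> y *)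
Definition is_orientation (n : nat) (o : rel 'I_n) : Prop :=
  (forall i, ~~ o i i) /\ (forall i j, i != j -> o i j = ~~ o j i).

Definition indeg (n : nat) (o : rel 'I_n) (i : 'I_n) : nat := #|[set j | o j i]|.

(* Main.v *)
Require Import Defs.
From HB Require Import structures.
From mathcomp Require Import all_boot zify.
Set Implicit Arguments. Unset Strict Implicit.

Lemma run_cons n l (d d1 : config n) o s : step l d o = Some d1 -> run l d (o :: s) = run l d1 s.
Proof. by rewrite /run /= => ->. Qed.

Lemma run_cat n l (d d1 : config n) s1 s2 : run l d s1 = Some d1 -> run l d (s1 ++ s2) = run l d1 s2.
Proof. by rewrite /run foldl_cat => ->. Qed.

Lemma run_adds n l (d : config n) i k : run l d (nseq k (Add i)) = Some [ffun j => d j + (j == i) * k].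
Proof.
elim: k d => [|k IH] d /=.
  by congr Some; apply/ffunP=> j; rewrite ffunE muln0 addn0.
rewrite (run_cons (d1 := [ffun j => d j + (j == i)]) _) // IH; congr Some.
apply/ffunP => j; rewrite !ffunE; case: (j == i) => /=; lia.
Qed.

Lemma run_shed n l (d : config n) u k : 1 <= l -> deg n l + k <= d u ->
  run l d (nseq k (Topple u set0 1)) = Some [ffun j => if j == u then d u - k else d j].
Proof.
elim: k d => [|k IH] d hl hk /=.
  by congr Some; apply/ffunP => j; rewrite ffunE; case: eqP => // ->; rewrite subn0.
rewrite (run_cons (d1 := [ffun j => if j == u then d u - 1 else d j]) _).
  rewrite IH //; last by rewrite ffunE eqxx; lia.
  congr Some; apply/ffunP => j; rewrite !ffunE eqxx; case: eqP => /= _ //; lia.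

rewrite /step.
have -> : deg n l <= d u by lia.
rewrite hl in_set0 /=; congr Some; apply/ffunP => j.
by rewrite !ffunE cards0 in_set0 /=; case: eqP => //; rewrite addn0.
Qed.

Lemma run_ftop n l (d : config n) (u : 'I_n) (A : {set 'I_n}) s : s <= l -> u \notin A ->
  run l d (nseq (deg n l - d u) (Add u) ++ [:: Topple u A s]) =
  Some [ffun j => if j == u then maxn (d u) (deg n l) - (#|A| + s) else d j + (j \in A)].
Proof.
move=> hs hA; rewrite (run_cat _ (run_adds _ _ _ _)) /run /= /step ffunE eqxx mul1n.
have -> : deg n l <= d u + (deg n l - d u) by lia.
rewrite hs hA /=; congr Some; apply/ffunP => j; rewrite !ffunE.
case: eqP => _ /=; lia.
Qed.

Lemma run_fill n l (c : config n) : forall (s : seq 'I_n) (d : config n),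
  (forall j, d j <= c j) -> (forall j, j \notin s -> d j = c j) ->
  exists ops, run l d ops = Some c /\ all (fun op => if op is Add _ then true else false) ops.
Proof.
elim => [|i s IH] d hle hs.
  by exists [::]; split => //; congr Some; apply/ffunP => j; rewrite hs.
set d1 := [ffun j => d j + (j == i) * (c i - d i)].
have hA : forall j, d1 j <= c j.
  move=> j; rewrite ffunE; case: (eqVneq j i) => [->|hji] /=; last by rewrite mul0n addn0.
  by rewrite mul1n; have := hle i; lia.
have hB : forall j, j \notin s -> d1 j = c j.
  move=> j hj; rewrite ffunE; case: (eqVneq j i) => [->|hji] /=.
    by rewrite mul1n; have := hle i; lia.
  by rewrite mul0n addn0 hs // inE negb_or hji.
have [ops [h1 h2]] := IH d1 hA hB.
exists (nseq (c i - d i) (Add i) ++ ops); split.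
  by rewrite (run_cat _ (run_adds _ _ _ _)).
by rewrite all_cat h2 andbT all_nseq orbT.
Qed.

Lemma last_topple_cat n (X Y : seq (op n)) p k : topples_vertex p k ->
  all (fun q => ~~ topples_vertex q k) Y -> last_topple (X ++ p :: Y) k (size X).
Proof.
move=> hp hY; split; first by rewrite /topple_at nth_cat ltnn subnn.
move=> t ht; rewrite /topple_at nth_cat ltnNge (ltnW ht) /=.
case E: (t - size X) => [|m]; first lia.
rewrite /=; case: (ltnP m (size Y)) => hm.
  exact: (all_nthP (Add k) hY m hm).
by rewrite nth_default.
Qed.

Lemma topple_before n (ops : seq (op n)) m k t :
  all (fun q => ~~ topples_vertex q k) (drop m ops) -> topple_at ops k t -> t < m.
Proof.
move=> hA ht; rewrite ltnNge; apply/negP => hmt.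
move: ht; rewrite /topple_at -(subnKC hmt) -nth_drop.
case: (ltnP (t - m) (size (drop m ops))) => h.
  by rewrite (negbTE (all_nthP (Add k) hA _ h)).
by rewrite nth_default.
Qed.

Lemma card_split n (P Q : pred 'I_n) :
  #|[set w | P w]| = #|[set w | Q w && P w]| + #|[set w | ~~ Q w && P w]|.
Proof.
rewrite -(cardsID [set w | Q w] [set w | P w]); congr (_ + _); apply: eq_card => w;
by rewrite !inE andbC.
Qed.

Lemma run_pass n l (o : rel 'I_n) (ho : is_orientation o) (hl : 1 <= l) :
  forall (r : seq 'I_n) (d : config n), uniq r ->
  (forall v, v \notin r -> d v + #|[set w | (w \in r) && o w v]| = indeg o v) ->
  exists ops, run l d ops = Some [ffun v => indeg o v] /\
    all (fun op => if op is Topple i _ _ then i \in r else true) ops.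
Proof.
case: ho => ho1 ho2.
elim => [|u r IH] d.
  move=> _ H; exists [::]; split => //; congr Some; apply/ffunP => v.
  rewrite ffunE -(H v) //.
  apply/eqP; rewrite -{1}(addn0 (d v)) eqn_add2l eq_sym cards_eq0.
  by apply/eqP/setP => w; rewrite !inE.
move=> /= /andP [hu hr] H.
have [ops1 [d' [h1 [h2 [h3 h4]]]]] : exists ops1 d', run l d ops1 = Some d' /\
    d' u <= deg n l /\ (forall j, j != u -> d' j = d j) /\
    all (fun op => if op is Topple i _ _ then i == u else true) ops1.
  case: (leqP (deg n l) (d u)) => hdu.
    exists (nseq (d u - deg n l) (Topple u set0 1)).
    exists [ffun j => if j == u then d u - (d u - deg n l) else d j].
    split; first by apply: run_shed => //; lia.
    split; first by rewrite ffunE eqxx; lia.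
    split; first by move=> j hj; rewrite ffunE (negbTE hj).
    by rewrite all_nseq /= eqxx orbT.
  exists [::], d; split => //; split; first by lia.
  by [].
set A := [set w | (w \in r) || o u w].
have huA : u \notin A by rewrite inE negb_or hu ho1.
set d'' := [ffun j => if j == u then maxn (d' u) (deg n l) - (#|A| + l)
                                    else d' j + (j \in A)].
have Hinv : forall v, v \notin r -> d'' v + #|[set w | (w \in r) && o w v]| = indeg o v.
move=> v hv; rewrite /d'' ffunE.
case: (eqVneq v u) => [->|hvu].
  set B := [set w | (w \notin r) && o w u].
  have hAB : #|A| + #|B| = n - 1.
    rewrite -cardsUI.
    have -> : A :&: B = set0.
      apply/setP => w; rewrite !inE.
      case: (w \in r) => //=.
      case: (eqVneq w u) => [->|hwu]; first by rewrite (negbTE (ho1 u)).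
      by rewrite (ho2 u w); [case: (o w u) | rewrite eq_sym].
    have -> : A :|: B = [set~ u].
      apply/setP => w; rewrite !inE.
      case: (eqVneq w u) => [->|hwu] /=.
        by rewrite (negbTE hu) (negbTE (ho1 u)).
      rewrite (ho2 u w); last by rewrite eq_sym.
      by case: (w \in r); case: (o w u).
    by rewrite cards0 addn0 cardsC1 card_ord subn1.
  have hsplit := card_split (fun w => o w u) (fun w => w \in r).
  rewrite /indeg hsplit -/B /deg.
  have : maxn (d' u) (n - 1 + l) = n - 1 + l by move: h2; rewrite /deg; lia.
  move=> ->; move: hAB; set a := #|A|; set b := #|B|; set x := #|[set w in r | o w u]|; lia.
rewrite h3 //.
have hvr : v \notin u :: r by rewrite inE negb_or hvu.
rewrite -(H v hvr) inE (negbTE hv) /=.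
rewrite [in RHS](cardsD1 u) !inE eqxx /= -addnA; congr (_ + _).
congr (_ + _).
apply: eq_card => w; rewrite !inE.
case: (eqVneq w u) => [->|hwu] //=.
by rewrite (negbTE hu).
have [ops2 [h5 h6]] := IH d'' hr Hinv.
exists (ops1 ++ (nseq (deg n l - d' u) (Add u) ++ [:: Topple u A l]) ++ ops2).
split.
  by rewrite (run_cat _ h1) (run_cat _ (run_ftop _ (leqnn l) huA)).
rewrite !all_cat all_nseq /= inE eqxx /= orbT andbT.
apply/andP; split.
  apply: sub_all h4 => op; case: op => // i _ _ /eqP ->; by rewrite inE eqxx.
apply: sub_all h6 => op; case: op => // i _ _ hi; by rewrite inE hi orbT.
Qed.

Definition F n l (d : config n) (u : 'I_n) : seq (op n) :=
  nseq (deg n l - d u) (Add u) ++ [:: Topple u [set~ u] l].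

Definition fd n l (d : config n) (u : 'I_n) : config n :=
  [ffun j => if j == u then maxn (d u) (deg n l) - deg n l else (d j).+1].

Lemma run_F n l (d : config n) u : run l d (F l d u) = Some (fd l d u).
Proof.
rewrite /F run_ftop // ?inE ?eqxx //; congr Some; apply/ffunP => j; rewrite !ffunE.
rewrite cardsC1 card_ord !inE /deg; case: eqP => _ /=.
  by rewrite subn1.
by rewrite addn1.
Qed.

Lemma fdE n l (d : config n) u j : fd l d u j = if j == u then maxn (d u) (deg n l) - deg n l else (d j).+1.
Proof. by rewrite ffunE. Qed.

Lemma card_count n (s : seq 'I_n) (P : pred 'I_n) : uniq s ->
  #|[set w | (w \in s) && P w]| = count P s.
Proof.
move=> hs; rewrite -size_filter -(card_uniqP (filter_uniq P hs)).
by apply: eq_card => w; rewrite !inE mem_filter andbC.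
Qed.

Lemma F_all n l (d : config n) u (P : pred (op n)) :
  (forall k, P (Add k)) -> P (Topple u [set~ u] l) -> all P (F l d u).
Proof. by move=> h1 h2; rewrite /F all_cat all_nseq h1 orbT /= h2. Qed.

Unset Implicit Arguments.

Theorem lemma5p5 (n l : nat) (hn : 3 <= n) (hl : 1 <= l) (c : config n)
  (hc : SR l c) (k1 k2 k3 : 'I_n)
  (h12 : k1 != k2) (h13 : k1 != k3) (h23 : k2 != k3)
  (o : rel 'I_n) (ho : is_orientation o)
  (hcin : forall i, indeg o i <= c i)
  (ho12 : o k1 k2) (ho23 : o k2 k3) (ho13 : o k1 k3) :
  exists ops : seq (op n),
    run l (cmax n l) ops = Some c /\
    all (fun op => [|| topples_vertex op k1, topples_vertex op k2
                      | topples_vertex op k3] ==> deterministic l op) ops /\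
    exists t1 t2,
      last_topple ops k1 t1 /\ last_topple ops k2 t2 /\ t2 < t1 /\
      (forall t, topple_at ops k3 t -> t < t2).
Proof.
have e21 : (k2 == k1) = false by rewrite eq_sym (negbTE h12).
have e31 : (k3 == k1) = false by rewrite eq_sym (negbTE h13).
have e32 : (k3 == k2) = false by rewrite eq_sym (negbTE h23).
have e12 := negbTE h12; have e13 := negbTE h13; have e23 := negbTE h23.
have hdeg : 3 <= deg n l by rewrite /deg; lia.
set c0 := cmax n l.
have c0E : forall j, c0 j = deg n l - 1 by move=> j; rewrite /c0 /cmax ffunE /deg; lia.
set d1 := fd l c0 k2.
have d1a : d1 k1 = deg n l by rewrite /d1 fdE e12 c0E; lia.
have d1b : d1 k2 = 0 by rewrite /d1 fdE eqxx c0E; lia.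
have d1c : d1 k3 = deg n l by rewrite /d1 fdE e32 c0E; lia.
set d2 := fd l d1 k3.
have d2a : d2 k1 = (deg n l).+1 by rewrite /d2 fdE e13 d1a.
have d2b : d2 k2 = 1 by rewrite /d2 fdE e23 d1b.
have d2c : d2 k3 = 0 by rewrite /d2 fdE eqxx d1c; lia.
set d3 := fd l d2 k1.
have d3a : d3 k1 = 1 by rewrite /d3 fdE eqxx d2a; lia.
have d3b : d3 k2 = 2 by rewrite /d3 fdE e21 d2b.
have d3c : d3 k3 = 1 by rewrite /d3 fdE e31 d2c.
set d4 := fd l d3 k3.
have d4a : d4 k1 = 2 by rewrite /d4 fdE e13 d3a.
have d4b : d4 k2 = 3 by rewrite /d4 fdE e23 d3b.
have d4c : d4 k3 = 0 by rewrite /d4 fdE eqxx d3c; lia.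
set d5 := fd l d4 k2.
have d5a : d5 k1 = 3 by rewrite /d5 fdE e12 d4a.
have d5b : d5 k2 = 0 by rewrite /d5 fdE eqxx d4b; lia.
have d5c : d5 k3 = 1 by rewrite /d5 fdE e32 d4c.
set d6 := fd l d5 k1.
have d6a : d6 k1 = 0 by rewrite /d6 fdE eqxx d5a; lia.
have d6b : d6 k2 = 1 by rewrite /d6 fdE e21 d5b.
have d6c : d6 k3 = 2 by rewrite /d6 fdE e31 d5c.
case: (ho) => ho1 ho2.
have o21 : o k2 k1 = false by rewrite ho2 ?ho12 // eq_sym.
have o31 : o k3 k1 = false by rewrite ho2 ?ho13 // eq_sym.
have o32 : o k3 k2 = false by rewrite ho2 ?ho23 // eq_sym.
set rest := [seq w <- enum 'I_n | [&& w != k1, w != k2 & w != k3]].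
have memr : forall w, (w \in rest) = [&& w != k1, w != k2 & w != k3].
  by move=> w; rewrite mem_filter mem_enum andbT.
have urest : uniq rest by rewrite filter_uniq // enum_uniq.
have Hinv : forall v, v \notin rest ->
    d6 v + #|[set w | (w \in rest) && o w v]| = indeg o v.
  move=> v hv.
  rewrite /indeg (card_split (fun w => o w v) (fun w => w \in rest)).
  rewrite addnC; congr (_ + _).
  have -> : #|[set w | (w \notin rest) && o w v]| =
            #|[set w | (w \in [:: k1; k2; k3]) && o w v]|.
    by apply: eq_card => w; rewrite !inE memr !negb_and !negbK.
  rewrite card_count /=; last by rewrite !inE negb_or h12 h13 h23.
  move: hv; rewrite memr !negb_and !negbK => /orP [/eqP ->|/orP [/eqP ->|/eqP ->]].
  - by rewrite d6a (negbTE (ho1 k1)) o21 o31.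
  - by rewrite d6b ho12 (negbTE (ho1 k2)) o32.
  - by rewrite d6c ho13 ho23 (negbTE (ho1 k3)).
have [P [hP1 hP2]] := run_pass ho hl urest Hinv.
have hf1 : forall j, [ffun v => indeg o v] j <= c j by move=> j; rewrite ffunE.
have hf2 : forall j, j \notin enum 'I_n -> [ffun v => indeg o v] j = c j.
  by move=> j; rewrite mem_enum.
have [Ad [hA1 hA2]] := run_fill l hf1 hf2.
set X2 := F l c0 k2 ++ F l d1 k3 ++ F l d2 k1 ++ F l d3 k3 ++ nseq (deg n l - d4 k2) (Add k2).
set Y2 := F l d5 k1 ++ P ++ Ad.
set X1 := X2 ++ Topple k2 [set~ k2] l :: nseq (deg n l - d5 k1) (Add k1).
set Y1 := P ++ Ad.
have opsE2 : F l c0 k2 ++ F l d1 k3 ++ F l d2 k1 ++ F l d3 k3 ++ F l d4 k2 ++ F l d5 k1 ++ P ++ Ad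
   = X2 ++ Topple k2 [set~ k2] l :: Y2.
  by rewrite /X2 /Y2 /F -!catA.
have opsE1 : F l c0 k2 ++ F l d1 k3 ++ F l d2 k1 ++ F l d3 k3 ++ F l d4 k2 ++ F l d5 k1 ++ P ++ Ad
   = X1 ++ Topple k1 [set~ k1] l :: Y1.
  by rewrite /X1 /X2 /Y1 /F -!catA.
exists (F l c0 k2 ++ F l d1 k3 ++ F l d2 k1 ++ F l d3 k3 ++ F l d4 k2 ++ F l d5 k1 ++ P ++ Ad).
split.
  rewrite (run_cat _ (run_F _ _ _)) -/d1 (run_cat _ (run_F _ _ _)) -/d2.
  rewrite (run_cat _ (run_F _ _ _)) -/d3 (run_cat _ (run_F _ _ _)) -/d4.
  rewrite (run_cat _ (run_F _ _ _)) -/d5 (run_cat _ (run_F _ _ _)) -/d6.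
  by rewrite (run_cat _ hP1).
have hPnot : forall k, k \notin rest -> all (fun q => ~~ topples_vertex q k) P.
  move=> k hk; move: hP2; apply: sub_all => q; case: q => // i _ _ hi /=.
  by apply/eqP => eik; move: hk; rewrite -eik hi.
have hAnot : forall k, all (fun q => ~~ topples_vertex q k) Ad.
  by move=> k; move: hA2; apply: sub_all => q; case: q.
have hk1 : k1 \notin rest by rewrite memr eqxx.
have hk2 : k2 \notin rest by rewrite memr eqxx andbF.
have hk3 : k3 \notin rest by rewrite memr eqxx !andbF.
split.
  do 6 (rewrite all_cat; apply/andP; split; first by apply: F_all => //=; rewrite !eqxx ?orbT).
  rewrite all_cat; apply/andP; split.
    move: hP2; apply: sub_all => q; case: q => // i A s hi /=.
    by move: hi; rewrite memr => /and3P [/negbTE -> /negbTE -> /negbTE ->].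
  by move: hA2; apply: sub_all => q; case: q.
exists (size X1), (size X2).
split. rewrite opsE1; apply: last_topple_cat; first by rewrite /= eqxx. by rewrite all_cat hPnot ?hAnot.

split.
  rewrite opsE2; apply: last_topple_cat; first by rewrite /= eqxx.
  rewrite /Y2 !all_cat hPnot ?hAnot // andbT.
  by rewrite all_nseq orbT /= e12.
split.
  rewrite /X1 size_cat -{1}(addn0 (size X2)) ltn_add2l; exact: ltn0Sn.
move=> t; apply: topple_before.
rewrite opsE2 (drop_size_cat _ (erefl _)) -cat1s all_cat; apply/andP; split.
  by rewrite /= e23.
rewrite /Y2 all_cat; apply/andP; split.
  by apply: F_all => //; rewrite /= e13.
by rewrite all_cat hPnot ?hAnot.
Qed.
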